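(* Let $n\le 3$ and $R=\mathbb{C}[z_1,\dots,z_n]$. Let $f_1,\dots,f_P,g\in R$ be homogeneous polynomials of degree $m$ with $\{f_1,\dots,f_P,g\}$ linearly independent over $\mathbb{C}$, and let $I^+=\langle f_1,\dots,f_P\rangle$. If $\langle g\rangle_{m+1}\subseteq I^+_{m+1}$, then $P\ge n$.
   Context: For a homogeneous ideal $I\subseteq R$, $I_{d}$ denotes its homogeneous component of degree $d$. *)

(* Defs.v *)
(* multinomials (mpoly) over the complex numbers R[i],
   where R : realType (any realType is isomorphic to the real numbers). *)
From HB Require Import structures.
From mathcomp Require Import all_boot all_order all_algebra.
From mathcomp Require Import mpoly.
From mathcomp Require Import complex.
From mathcomp Require Import reals.

Set Implicit Arguments.
Unset Strict Implicit.
Unset Printing Implicit Defensive.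

Import GRing.Theory.
Local Open Scope ring_scope.

Definition in_ideal (A : comNzRingType) (P : nat) (f : 'I_P -> A) (p : A) : Prop :=
  exists h : 'I_P -> A, p = \sum_(i < P) h i * f i.

Definition in_ideal_deg (C : comNzRingType) (n P d : nat)
    (f : 'I_P -> {mpoly C[n]}) (p : {mpoly C[n]}) : Prop :=
  p \is d.-homog /\ in_ideal f p.

Definition lin_indep_with (C : comNzRingType) (n P : nat)
    (f : 'I_P -> {mpoly C[n]}) (g : {mpoly C[n]}) : Prop :=
  forall (c : 'I_P -> C) (d : C),
    \sum_(i < P) c i *: f i + d *: g = 0 -> (forall i, c i = 0) /\ d = 0.

(* Main.v *)
Require Import Defs.
From HB Require Import structures.
From mathcomp Require Import all_boot all_order all_algebra.
From mathcomp Require Import mpoly.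
From mathcomp Require Import complex.
From mathcomp Require Import reals.
From Stdlib Require Import Classical.
From mathcomp Require Import ring.
Set Implicit Arguments.
Unset Strict Implicit.
Unset Printing Implicit Defensive.
Import GRing.Theory.
Local Open Scope ring_scope.

Section Lin.
Variable (K : fieldType) (n : nat).
Local Notation Pol := {mpoly K[n]}.

Definition lin (c : 'rV[K]_n) : Pol := \sum_(i < n) c 0 i *: 'X_i.

Lemma linD c d : lin (c + d) = lin c + lin d.
Proof. by rewrite /lin -big_split; apply: eq_bigr => i _; rewrite mxE scalerDl. Qed.

Lemma linZ a c : lin (a *: c) = a *: lin c.
Proof. by rewrite /lin scaler_sumr; apply: eq_bigr => i _; rewrite mxE scalerA. Qed.

Lemma lin0 : lin 0 = 0.
Proof. by rewrite /lin big1 // => i _; rewrite mxE scale0r. Qed.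

Lemma linN c : lin (- c) = - lin c.
Proof. by rewrite -scaleN1r linZ scaleN1r. Qed.

Lemma linB c d : lin (c - d) = lin c - lin d.
Proof. by rewrite linD linN. Qed.

Lemma mcoeff_lin c k : (lin c)@_U_(k) = c 0 k.
Proof.
rewrite /lin raddf_sum /= (bigD1 k) //= big1 ?addr0.
  by rewrite mcoeffZ mcoeffXU eqxx mulr1.
by move=> i /negbTE ik; rewrite mcoeffZ mcoeffXU ik mulr0.
Qed.

Lemma lin_eq0 c : lin c = 0 -> c = 0.
Proof.
move=> h; apply/rowP => k; rewrite mxE -mcoeff_lin h mcoeff0 //.
Qed.

Lemma lin_homog c : lin c \is 1.-homog.
Proof.
apply: rpred_sum => i _; apply: rpredZ.
by rewrite dhomogX /=; apply/eqP; apply: mdeg1.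
Qed.

Lemma homog1_lin p : p \is 1.-homog -> p = lin (\row_k p@_U_(k)).
Proof.
move=> hp; apply/mpolyP => m.
have [/mdeg1P [i /eqP ->]|] := boolP (mdeg m == 1%N).
  by rewrite mcoeff_lin mxE.
move=> hm; rewrite (dhomog_nemf_coeff hp) //.
rewrite /lin raddf_sum /= big1 // => i _.
rewrite mcoeffZ mcoeffX; case: eqP => [e|]; last by rewrite mulr0.
by move: hm; rewrite -e mdeg1.
Qed.

Lemma lin_mulmx c (A : 'M[K]_n) : lin (c *m A) = \sum_i c 0 i *: lin (row i A).
Proof.
rewrite /lin; under eq_bigr do rewrite mxE scaler_suml.
rewrite exchange_big /=; apply: eq_bigr => i _; rewrite scaler_sumr.
by apply: eq_bigr => k _; rewrite mxE scalerA.
Qed.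

Lemma lin_row1 (i : 'I_n) : lin (row i 1%:M) = 'X_i.
Proof.
rewrite /lin (bigD1 i) //= big1 ?addr0; first by rewrite mxE mxE eqxx scale1r.
by move=> j ji; rewrite !mxE eq_sym (negbTE ji) scale0r.
Qed.


Lemma row_nz (c : 'rV[K]_n) : c != 0 -> exists k, c 0 k != 0.
Proof.
move=> c0; case: (pickP (fun k => c 0 k != 0)) => [k hk|h]; first by exists k.
move/eqP: c0; case; apply/rowP => k; rewrite mxE.
by move: (h k) => /negbFE /eqP.
Qed.

Definition sigt (c : 'rV[K]_n) (k : 'I_n) : n.-tuple Pol :=
  [tuple (if i == k then 'X_i - (c 0 k)^-1 *: lin c else 'X_i) | i < n].

Lemma sigX c k i : 'X_i \mPo sigt c k = if i == k then 'X_i - (c 0 k)^-1 *: lin c else 'X_i.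
Proof. by rewrite comp_mpolyXU -tnth_nth tnth_mktuple. Qed.

Lemma sig_lin c k d : lin d \mPo sigt c k = lin (d - (d 0 k / c 0 k) *: c).
Proof.
rewrite linB linZ /lin raddf_sum /=.
under eq_bigr do rewrite comp_mpolyZ sigX.
have -> : \sum_(i < n) d 0 i *: (if i == k then 'X_i - (c 0 k)^-1 *: lin c else 'X_i)
   = \sum_(i < n) (d 0 i *: 'X_i - (if i == k then d 0 i *: ((c 0 k)^-1 *: lin c) else 0)).
  by apply: eq_bigr => i _; case: eqP => _; rewrite ?subr0 // scalerBr.
rewrite sumrB -big_mkcond big_pred1_eq scalerA.
by rewrite /lin.
Qed.

Lemma sig_ker (c : 'rV[K]_n) (k : 'I_n) (p : Pol) : c 0 k != 0 -> p \mPo sigt c k = 0 -> exists h, p = lin c * h.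
Proof.
move=> ck hp.
pose D (q : Pol) := exists h, q - (q \mPo sigt c k) = lin c * h.
have DD q r : D q -> D r -> D (q + r).
  move=> [h1 e1] [h2 e2]; exists (h1 + h2).
  by rewrite comp_mpolyD opprD addrACA e1 e2 mulrDr.
have DM q r : D q -> D r -> D (q * r).
  move=> [h1 e1] [h2 e2]; exists (h1 * r + (q \mPo sigt c k) * h2).
  rewrite rmorphM /=.
  have -> : q * r - (q \mPo sigt c k) * (r \mPo sigt c k)
     = (q - (q \mPo sigt c k)) * r + (q \mPo sigt c k) * (r - (r \mPo sigt c k)).
    by rewrite mulrBl mulrBr addrA subrK.
  by rewrite e1 e2 mulrDr !mulrA [(q \mPo _) * lin c]mulrC.
have DC a : D a%:MP.
  by exists 0; rewrite comp_mpolyC subrr mulr0.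
have DX i : D 'X_i.
  exists (if i == k then ((c 0 k)^-1)%:MP else 0).
  rewrite sigX; case: eqP => _; last by rewrite subrr mulr0.
  by rewrite opprB addrC subrK -mul_mpolyC mulrC.
have D1 : D 1 by have := DC 1; rewrite mpolyC1.
have DXe i e : D ('X_i ^+ e).
  by elim: e => [|e ih]; rewrite ?expr0 // exprS; apply: (DM).
have Dp : D p.
  rewrite [p]mpolyE; apply: (big_ind D) => //.
    by have := DC 0; rewrite mpolyC0.
  move=> m _; rewrite -mul_mpolyC; apply: (DM) => //.
  by rewrite mpolyXE_id; apply: (big_ind D) => //.
by case: Dp => h; rewrite hp subr0 => ->; exists h.
Qed.

Lemma lin_neq0 (c : 'rV[K]_n) : c != 0 -> lin c != 0.
Proof. by move=> c0; apply: contra c0 => /eqP /lin_eq0 ->. Qed.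

Lemma kill (c : 'rV[K]_n) : c != 0 -> exists s : {rmorphism Pol -> Pol},
  [/\ s (lin c) = 0,
      forall d, exists kap, s (lin d) = lin (d - kap *: c),
      forall d, s (lin d) = 0 -> exists mu, d = mu *: c
    & forall p, s p = 0 -> exists h, p = lin c * h].
Proof.
move=> /row_nz [k ck].
exists (comp_mpoly (sigt c k) : {rmorphism Pol -> Pol}); split => /=.
- by rewrite sig_lin divff // scale1r subrr lin0.
- by move=> d; exists (d 0 k / c 0 k); rewrite sig_lin.
- move=> d; rewrite sig_lin => /lin_eq0 /eqP; rewrite subr_eq0 => /eqP ->.
  by exists (d 0 k / c 0 k).
- by move=> p; apply: sig_ker.
Qed.

Lemma DIV (c d : 'rV[K]_n) (a b : Pol) : c != 0 -> ~ (exists mu, d = mu *: c) ->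
  lin c * a = lin d * b -> exists h, b = lin c * h /\ a = lin d * h.
Proof.
move=> c0 nd e.
have [s [sc sd sd0 sk]] := kill c0.
have : s (lin d) * s b = 0 by rewrite -rmorphM -e rmorphM sc mul0r.
move/eqP; rewrite mulf_eq0 => /orP [/eqP /sd0 hd|/eqP /sk [h hb]]; first by case: nd.
exists h; split => //.
apply/eqP; rewrite -subr_eq0; apply/eqP.
have : lin c * (a - lin d * h) = 0 by rewrite mulrBr e hb mulrCA subrr.
by move/eqP; rewrite mulf_eq0 (negbTE (lin_neq0 c0)) => /eqP.
Qed.

End Lin.
Section Homog.
Variable (K : idomainType) (n : nat).
Local Notation Pol := {mpoly K[n]}.

Lemma pihomogZ' d c (p : Pol) : pihomog mdeg d (c *: p) = c *: pihomog mdeg d p.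
Proof. by have := pihomog_is_linear mdeg d c p 0; rewrite !addr0 pihomog0 addr0. Qed.

Lemma pihomog_sum d (I : Type) (r : seq I) (P : pred I) (F : I -> Pol) :
  pihomog mdeg d (\sum_(i <- r | P i) F i) = \sum_(i <- r | P i) pihomog mdeg d (F i).
Proof. by elim/big_rec2: _ => [|i x y _ <-]; rewrite ?pihomog0 ?pihomogD. Qed.

Lemma pihomogM_l (a b : Pol) k t : a \is k.-homog ->
  pihomog mdeg (k + t) (a * b) = a * pihomog mdeg t b.
Proof.
move=> ha.
have -> : a * b = \sum_(m <- msupp b) a * (b@_m *: 'X_[m]).
  by rewrite {1}[b]mpolyE mulr_sumr.
have -> : pihomog mdeg t b = \sum_(m <- msupp b) pihomog mdeg t (b@_m *: 'X_[m]).
  by rewrite {1}[b]mpolyE pihomog_sum.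
rewrite pihomog_sum mulr_sumr; apply: eq_bigr => m _.
rewrite -scalerAr !pihomogZ' -scalerAr; congr (_ *: _).
have hm : a * 'X_[m] \is (k + mdeg m)%N.-homog.
  by apply: dhomogM => //; rewrite dhomogX.
rewrite pihomogX; case: eqP => [<-|ne].
  by rewrite pihomog_dE.
rewrite mulr0 (pihomog_ne0 _ hm) //.
by apply/eqP => /addnI.
Qed.

Lemma homog_factor (a b : Pol) k d : a != 0 -> a \is k.-homog ->
  a * b != 0 -> a * b \is d.-homog -> (k <= d)%N /\ b \is (d - k)%N.-homog.
Proof.
move=> a0 ha ab0 hab.
have comp t : (k + t)%N != d -> pihomog mdeg t b = 0.
  move=> tne.
  have : pihomog mdeg (k + t) (a * b) = 0.
    by apply: (pihomog_ne0 _ hab); rewrite eq_sym.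
  by rewrite pihomogM_l // => /eqP; rewrite mulf_eq0 (negbTE a0) /= => /eqP.
have b0 : b != 0 by apply: contraNneq ab0 => ->; rewrite mulr0.
set N := (maxn (msize b) (d - k)).+1.
have bE : b = \sum_(t < N) pihomog mdeg t b.
  by apply: pihomog_partitionE; rewrite mmeasureE leqW // leq_maxl.
have kd : (k <= d)%N.
  rewrite leqNgt; apply/negP => dk; move/eqP: b0; apply.
  rewrite bE big1 // => t _; apply: comp.
  by apply/eqP => e; move: dk; rewrite -e ltnNge leq_addr.
split=> //.
have -> : b = pihomog mdeg (d - k) b.
  have hdk : (d - k < N)%N by rewrite /N ltnS leq_maxr.
  rewrite {1}bE (bigD1 (Ordinal hdk)) //=.
  rewrite big1 ?addr0 // => t tne; apply: comp.
  by apply/eqP => e; move/eqP: tne; apply; apply: val_inj; rewrite /= -e addKn.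
exact: pihomogP.
Qed.
End Homog.

Section Extract.
Variable (K : fieldType) (n P m : nat).
Local Notation Pol := {mpoly K[n]}.

Lemma homogX1 (i : 'I_n) : ('X_i : Pol) \is 1.-homog.
Proof. by rewrite dhomogX /=; apply/eqP; apply: mdeg1. Qed.

Lemma extract (f : 'I_P -> Pol) (g : Pol) :
  (forall j, f j \is m.-homog) -> g \is m.-homog ->
  (forall p : Pol, in_ideal_deg (m.+1) (fun _ : 'I_1 => g) p -> in_ideal_deg (m.+1) f p) ->
  exists A : 'I_P -> 'M[K]_n, forall c, lin c * g = \sum_j lin (c *m A j) * f j.
Proof.
move=> hf hg hsub.
have H : forall i : 'I_n, exists h : 'I_P -> Pol, 'X_i * g = \sum_j h j * f j.
  move=> i.
  have hin : in_ideal_deg (m.+1) (fun _ : 'I_1 => g) ('X_i * g).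
    split; first by rewrite -add1n; apply: dhomogM => //; apply: homogX1.
    by exists (fun _ => 'X_i); rewrite big_ord1.
  by have [_ [h e]] := hsub _ hin; exists h.
have [H' HH] := fin_all_exists H.
pose A j := \matrix_(i, k) (pihomog mdeg 1 (H' i j))@_U_(k).
exists A => c.
have key i : 'X_i * g = \sum_j lin (row i (A j)) * f j.
  have hXg : 'X_i * g \is (1 + m)%N.-homog by apply: dhomogM => //; apply: homogX1.
  rewrite -(pihomog_dE hXg) HH pihomog_sum; apply: eq_bigr => j _.
  rewrite mulrC addnC pihomogM_l // mulrC; congr (_ * _).
  rewrite [LHS]homog1_lin; last exact: pihomogP.
  by congr lin; apply/rowP => k; rewrite !mxE.
rewrite {1}/lin mulr_suml.
under eq_bigr do rewrite -scalerAl key scaler_sumr.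
rewrite exchange_big /=; apply: eq_bigr => j _.
rewrite lin_mulmx mulr_suml; apply: eq_bigr => i _.
by rewrite scalerAl.
Qed.

End Extract.

Section Core.
Variable (K : fieldType) (n : nat).
Local Notation Pol := {mpoly K[n]}.

Lemma lin_mulmxB (c : 'rV[K]_n) (A : 'M[K]_n) lam :
  lin (c *m (A - lam%:M)) = lin (c *m A) - lam *: lin c.
Proof. by rewrite mulmxBr mul_mx_scalar linB linZ. Qed.

Lemma mulf_eq0P (p q : Pol) : p != 0 -> p * q = 0 -> q = 0.
Proof. by move=> p0 /eqP; rewrite mulf_eq0 (negbTE p0) => /eqP. Qed.

Lemma rank_contra (c c0 : 'rV[K]_n) : (2 < n)%N ->
  (forall i : 'I_n, exists pp : K * K, row i 1%:M = pp.1 *: c + pp.2 *: c0) -> False.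
Proof.
move=> n2 H.
have [F HF] := fin_all_exists H.
pose X : 'M[K]_(n,2) := \matrix_(i, j) (if j == 0 then (F i).1 else (F i).2).
pose Y : 'M[K]_(2,n) := \matrix_(j, k) (if j == 0 then c 0 k else c0 0 k).
have e : (1%:M : 'M[K]_n) = X *m Y.
  apply/matrixP => i k.
  have := congr1 (fun v : 'rV[K]_n => v 0 k) (HF i); rewrite !mxE => ->.
  by rewrite big_ord_recl big_ord_recl big_ord0 !mxE /= addr0.
have : (\rank (1%:M : 'M[K]_n) <= 2)%N.
  by rewrite e (leq_trans (mxrankM_maxl _ _)) // rank_leq_col.
by rewrite mxrank1 => /leq_ltn_trans /(_ n2); rewrite ltnn.
Qed.

Lemma core2 m (f1 f2 g : Pol) (A B : 'M[K]_n) (c0 : 'rV[K]_n) lam :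
  (2 < n)%N ->
  f1 \is m.-homog -> f2 \is m.-homog -> g \is m.-homog ->
  f1 != 0 -> f2 != 0 -> (forall a b, g != a *: f1 + b *: f2) ->
  (forall c, lin c * g = lin (c *m A) * f1 + lin (c *m B) * f2) ->
  c0 != 0 -> c0 *m A = lam *: c0 -> False.
Proof.
move=> n2 hf1 hf2 hg f10 f20 hind hrel0 c00 hc0.
set G := g - lam *: f1.
set A' := A - lam%:M.
have hrel c : lin c * G = lin (c *m A') * f1 + lin (c *m B) * f2.
  rewrite /G /A' mulrBr hrel0 lin_mulmxB mulrBl -scalerAl -scalerAr.
  by rewrite addrAC.
have hG a b : G != a *: f1 + b *: f2.
  by rewrite /G subr_eq addrAC -scalerDl.
have hc0A : c0 *m A' = 0 by rewrite /A' mulmxBr hc0 mul_mx_scalar subrr.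
set d1 := c0 *m B.
have e0 : lin c0 * G = lin d1 * f2 by rewrite hrel hc0A lin0 mul0r add0r.
case: (classic (exists mu, d1 = mu *: c0)) => [[mu hmu]|nd].
  move: e0; rewrite hmu linZ -scalerAl scalerAr => /eqP; rewrite -subr_eq0 -mulrBr.
  move/eqP/(mulf_eq0P (lin_neq0 c00))/eqP; rewrite subr_eq0 => /eqP hGe.
  by move: (hG 0 mu); rewrite hGe scale0r add0r eqxx.
have [h [hf2h hGh]] := DIV c00 nd e0.
have h0 : h != 0.
  apply/negP => /eqP h0; move: (hG 0 0); rewrite hGh h0 mulr0 !scale0r addr0 eqxx //.
pose q c := lin c * lin d1 - lin (c *m B) * lin c0.
have hq c : lin (c *m A') * f1 = h * q c.
  have := hrel c; rewrite hGh hf2h /q => e.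
  apply: (addIr (lin (c *m B) * (lin c0 * h))); rewrite -e; ring.
have hker c : c *m A' = 0 -> exists mu, c = mu *: c0.
  move=> hc; have := hq c; rewrite hc lin0 mul0r => /esym /(mulf_eq0P h0) /eqP.
  rewrite /q subr_eq0 => /eqP eq.
  have [s [sc sd sd0 sk]] := kill c00.
  have : s (lin c) * s (lin d1) = 0 by rewrite -rmorphM eq rmorphM sc mulr0.
  move/eqP; rewrite mulf_eq0 => /orP [/eqP /sd0 //|/eqP /sd0 hd]; by case: nd.
have [c [c' [hcA hnd]]] :
    exists c c' : 'rV[K]_n, c *m A' != 0 /\ ~ (exists mu, c' *m A' = mu *: (c *m A')).
  apply: NNPP => H5.
  have H5' : forall c c' : 'rV[K]_n, c *m A' != 0 -> exists mu, c' *m A' = mu *: (c *m A').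
    move=> c c' hc; apply: NNPP => hn; apply: H5; by exists c, c'.
  have [cc hcc] : exists cc, forall i : 'I_n,
      exists pp : K * K, row i 1%:M = pp.1 *: cc + pp.2 *: c0.
    case: (classic (exists c : 'rV[K]_n, c *m A' != 0)) => [[c hc]|hno].
      exists c => i; have [mu hmu] := H5' c (row i 1%:M) hc.
      have hz : (row i 1%:M - mu *: c) *m A' = 0.
        by rewrite mulmxBl hmu -scalemxAl subrr.
      have [psi hpsi] := hker _ hz.
      by exists (mu, psi) => /=; rewrite -hpsi addrC subrK.
    exists 0 => i.
    have hz : row i 1%:M *m A' = 0.
      by apply: NNPP => hn; apply: hno; exists (row i 1%:M); apply/eqP.
    have [psi hpsi] := hker _ hz.
    by exists (0, psi); rewrite /= scale0r add0r.
  exact: rank_contra n2 hcc.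
have e6 : lin (c *m A') * q c' = lin (c' *m A') * q c.
  apply/eqP; rewrite -subr_eq0; apply/eqP; apply: (mulf_eq0P h0).
  have -> : h * (lin (c *m A') * q c' - lin (c' *m A') * q c)
     = lin (c *m A') * (h * q c') - lin (c' *m A') * (h * q c) by ring.
  by rewrite -!hq; ring.
have [w [hqc _]] := DIV hcA hnd e6.
have hf1w : f1 = h * w.
  have := hq c; rewrite hqc => e.
  apply/eqP; rewrite -subr_eq0; apply/eqP; apply: (mulf_eq0P (lin_neq0 hcA)).
  by rewrite mulrBr e; ring.
have f2ne : lin c0 * h != 0 by rewrite -hf2h.
have f2hm : lin c0 * h \is m.-homog by rewrite -hf2h.
have [m1 hh] := homog_factor (lin_neq0 c00) (lin_homog c0) f2ne f2hm.
have f1ne : h * w != 0 by rewrite -hf1w.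
have f1hm : h * w \is m.-homog by rewrite -hf1w.
have [_ hw] := homog_factor h0 hh f1ne f1hm.
rewrite subKn // in hw.
set e := \row_k w@_U_(k).
have hwe : w = lin e := homog1_lin hw.
have hfin c2 : lin c2 * lin d1 = lin (c2 *m A') * lin e + lin (c2 *m B) * lin c0.
  have := hrel c2; rewrite hGh hf2h hf1w -hwe => E.
  apply/eqP; rewrite -subr_eq0; apply/eqP; apply: (mulf_eq0P h0).
  have -> : h * (lin c2 * lin d1 - (lin (c2 *m A') * w + lin (c2 *m B) * lin c0))
     = lin c2 * (lin d1 * h) - (lin (c2 *m A') * (h * w) + lin (c2 *m B) * (lin c0 * h)).
    by ring.
  by rewrite E subrr.
have F := hfin d1.
have [s0 [s0c s0d s0d0 s0k]] := kill c00.
have [k1 hk1] := s0d d1.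
have [k2 hk2] := s0d e.
have F0 : s0 (lin d1) * s0 (lin d1) = s0 (lin (d1 *m A')) * s0 (lin e).
  by rewrite -rmorphM F rmorphD !rmorphM s0c mulr0 addr0.
case: (eqVneq (e - k2 *: c0) 0) => [e0'|ne'].
  move: F0; rewrite hk2 e0' lin0 mulr0 => /eqP; rewrite mulf_eq0 orbb => /eqP /s0d0 hd.
  by case: nd.
have [s1 [s1c s1d s1d0 s1k]] := kill ne'.
have F1 : s1 (s0 (lin d1)) * s1 (s0 (lin d1)) = 0.
  by rewrite -rmorphM F0 rmorphM hk2 s1c mulr0.
move: F1 => /eqP; rewrite mulf_eq0 orbb hk1 => /eqP /s1d0 [mu hmu].
have hd1 : d1 = mu *: e + (k1 - mu * k2) *: c0.
  rewrite -[d1](subrK (k1 *: c0)) hmu scalerBr scalerA scalerBl -addrA.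
  by congr (_ + _); rewrite addrC.
apply: (negP (hG mu (k1 - mu * k2))); apply/eqP.
rewrite hGh hf1w hf2h hwe hd1 linD !linZ mulrDl -!scalerAl.
by rewrite [lin e * h]mulrC [h * lin e]mulrC.
Qed.

End Core.

Lemma sum2 (T : nmodType) (F : 'I_2 -> T) : \sum_(j < 2) F j = F ord0 + F ord_max.
Proof. by rewrite big_ord_recl big_ord1; congr (_ + F _); apply: val_inj. Qed.

Unset Implicit Arguments.

Theorem proposition2 (R : realType) (n P m : nat) (hn : (n <= 3)%N)
    (f : 'I_P -> {mpoly R[i][n]}) (g : {mpoly R[i][n]})
    (hf : forall j, f j \is m.-homog) (hg : g \is m.-homog)
    (hind : lin_indep_with f g)
    (hsub : forall p : {mpoly R[i][n]},
        in_ideal_deg (m.+1) (fun _ : 'I_1 => g) p -> in_ideal_deg (m.+1) f p) :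
  (n <= P)%N.
Proof.
rewrite leqNgt; apply/negP => hPn.
have [A hA] := extract hf hg hsub.
have eig : forall M : 'M[R[i]]_n, (0 < n)%N ->
    exists lam, exists2 c : 'rV_n, c *m M = lam *: c & c != 0.
  move=> M n0; have [a /eigenvalueP [c hc c0]] := eigenvalue_closed M n0.
  by exists a, c.
move: f hf hind hsub A hA hPn; case: P => [|[|[|P]]] f hf hind hsub A hA hPn.
- have c0 : row (Ordinal hPn) (1%:M : 'M[R[i]]_n) != 0.
    apply/eqP => /rowP /(_ (Ordinal hPn)); rewrite !mxE eqxx => /eqP.
    by rewrite oner_eq0.
  have := hA (row (Ordinal hPn) 1%:M); rewrite big_ord0.
  move/(mulf_eq0P (lin_neq0 c0)) => g0.
  have := hind (fun _ => 0) 1; rewrite big_ord0 g0 scaler0 addr0.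
  by case=> // _ /eqP; rewrite oner_eq0.
- have [lam [c hc c0]] := eig (A ord0) (ltn_trans (ltn0Sn 0) hPn).
  have := hA c; rewrite big_ord1 hc linZ -scalerAl scalerAr => /eqP.
  rewrite -subr_eq0 -mulrBr => /eqP /(mulf_eq0P (lin_neq0 c0)) /eqP.
  rewrite subr_eq0 => /eqP ge.
  have := hind (fun _ => - lam) 1; rewrite big_ord1 scale1r ge scaleNr addNr.
  by case=> // _ /eqP; rewrite oner_eq0.
- have n0 : (0 < n)%N by apply: leq_ltn_trans hPn.
  have [lam [c hc c0]] := eig (A ord0) n0.
  have f1ne : f ord0 != 0.
    apply/eqP => e.
    have [hc1 _] : (forall j : 'I_2, (j == ord0)%:R = 0 :> R[i]) /\ (0 : R[i]) = 0.
      by apply: (hind (fun j => (j == _)%:R) 0); rewrite sum2 e /= !(scaler0, scale0r, addr0).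
    by move: (hc1 ord0); rewrite eqxx => /eqP; rewrite oner_eq0.
  have f2ne : f ord_max != 0.
    apply/eqP => e.
    have [hc1 _] : (forall j : 'I_2, (j == ord_max)%:R = 0 :> R[i]) /\ (0 : R[i]) = 0.
      by apply: (hind (fun j => (j == _)%:R) 0); rewrite sum2 e /= !(scaler0, scale0r, addr0).
    by move: (hc1 ord_max); rewrite eqxx => /eqP; rewrite oner_eq0.
  apply: (core2 (m := m) (f1 := f ord0) (f2 := f ord_max) (g := g)
           (A := A ord0) (B := A ord_max) hPn (hf _) (hf _) hg f1ne f2ne _ _ c0 hc).
    move=> a b; apply/eqP => e.
    have := hind (fun j => if j == ord0 then - a else - b) 1.
    rewrite sum2 /= scale1r e !scaleNr -opprD addNr.
    by case=> // _ /eqP; rewrite oner_eq0.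
  by move=> c2; rewrite hA sum2.
- by have := leq_trans hPn hn.
Qed.
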